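(* Let $T$ be a complete theory with monster model $\mathcal{U}$, $A\subseteq\mathcal{U}$ small, $\mu\in\mathfrak{M}_x(\mathcal{U})$, and $\nu_1,\nu_2\in\mathfrak{M}_y(\mathcal{U})$ with $\operatorname{supp}(\nu_1)\cap\operatorname{supp}(\nu_2)=\emptyset$. Suppose $\mu\blacktriangleright_A\nu_1$ and $\mu\blacktriangleright_A\nu_2$. Then there exists a finite tuple $b$ from $\mathcal{U}$ such that for all $r,s\in[0,1]$ with $r+s=1$, $\mu\blacktriangleright_{Ab}r\nu_1+s\nu_2$.
   Context: For $C\subseteq\mathcal{U}$, $\mathcal{L}_x(C)$ is the Boolean algebra of formulas in $x$ with parameters from $C$ modulo $T$, embedded in $\mathcal{L}_{xy}(C)$ via $\varphi(x)\mapsto\varphi(x)\wedge y=y$; $\mathfrak{M}_x(C)$ is the set of finitely additive probability measures on $\mathcal{L}_x(C)$. For $\omega\in\mathfrak{M}_{xy}(C)$, $\pi_x(\omega)(\varphi(x))=\omega(\varphi(x)\wedge y=y)$ (similarly $\pi_y$); $\omega|_D$ is restriction. The support $\operatorname{supp}(\nu)$ of $\nu\in\mathfrak{M}_y(\mathcal{U})$ is the set of $q\in S_y(\mathcal{U})$ such that $\nu(\psi)>0$ for every $\psi\in q$. $\mathfrak{M}^{\mathrm{Am}}_{xy}(C)$ is the set of $\lambda\in\mathfrak{M}_{xy}(C)$ with $\lambda(\varphi(x)\wedge\psi(y))=\pi_x(\lambda)(\varphi(x))\pi_y(\lambda)(\psi(y))$ for all $\varphi(x)\in\mathcal{L}_x(C),\psi(y)\in\mathcal{L}_y(C)$.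 For $\lambda\in\mathfrak{M}^{\mathrm{Am}}_{xy}(C)$ with $\pi_x(\lambda)=\mu|_C$: $\operatorname{Amal}(\lambda,\mu)=\{\omega\in\mathfrak{M}^{\mathrm{Am}}_{xy}(\mathcal{U}):\omega|_C=\lambda,\pi_x(\omega)=\mu\}$. $\mu\blacktriangleright_C\nu$ means there is $\lambda\in\mathfrak{M}_{xy}(C)$ with $\pi_x(\lambda)=\mu|_C$, $\operatorname{Amal}(\lambda,\mu)\neq\emptyset$, and $\pi_y(\omega)=\nu$ for every $\omega\in\operatorname{Amal}(\lambda,\mu)$. $Ab$ denotes $A$ together with the entries of $b$. *)

(* Defs.v *)
From Stdlib Require Import Reals List.
From mathcomp Require Import ssreflect ssrfun ssrbool eqtype ssrnat fintype.

Set Implicit Arguments.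
Unset Strict Implicit.
Unset Printing Implicit Defensive.

Record language := Language { rsym : Type ; rar : rsym -> nat }.

Record structure (L : language) := Structure {
  dom :> Type ;
  rinterp : forall r : rsym L, ('I_(rar r) -> dom) -> Prop }.

Inductive formula (L : language) : Type :=
  | F_eq  : nat -> nat -> formula L
  | F_rel : forall r : rsym L, ('I_(rar r) -> nat) -> formula L
  | F_not : formula L -> formula L
  | F_and : formula L -> formula L -> formula L
  | F_ex  : nat -> formula L -> formula L.

Fixpoint sat (L : language) (M : structure L) (e : nat -> M) (phi : formula L)
  : Prop :=
  match phi with
  | F_eq i j => e i = e j
  | F_rel r a => @rinterp L M r (fun k => e (a k))
  | F_not p => ~ sat e p
  | F_and p q => sat e p /\ sat e q
  | F_ex i p => exists u : M, sat (fun j => if j == i then u else e j) p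
  end.

(* subsets of M^n (n-tuples), i.e. "formulas in n variables" read semantically *)
Definition tpred (L : language) (M : structure L) (n : nat) :=
  ('I_n -> M) -> Prop.

Definition definable (L : language) (M : structure L) (C : M -> Prop)
  (n : nat) (D : tpred M n) : Prop :=
  exists (phi : formula L) (k : nat) (p : 'I_k -> M),
    (forall i, C (p i)) /\
    forall (v : 'I_n -> M) (e : nat -> M),
      (forall i : 'I_n, e i = v i) ->
      (forall i : 'I_k, e (n + i) = p i) ->
      (D v <-> sat e phi).

Definition card_le (A B : Type) : Prop := exists f : A -> B, injective f.
Definition card_lt (A B : Type) : Prop := card_le A B /\ ~ card_le B A.

Definition small (L : language) (M : structure L) (K : Type) (C : M -> Prop) :=
  card_lt {u : M | C u} K.

(* kappa-saturation: every family of C-definable sets in one variable (C small)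
   with the finite intersection property (i.e. a partial 1-type over C) is realized *)
Definition saturated (L : language) (M : structure L) (K : Type) : Prop :=
  forall C : M -> Prop, small K C ->
  forall F : tpred M 1 -> Prop,
    (forall D, F D -> definable C D) ->
    (forall l : list (tpred M 1), (forall D, In D l -> F D) ->
        exists v, forall D, In D l -> D v) ->
    exists v, forall D, F D -> D v.

Definition partial_elementary (L : language) (M : structure L)
  (C : M -> Prop) (f : M -> M) : Prop :=
  forall (phi : formula L) (e : nat -> M), (forall i, C (e i)) ->
    (sat e phi <-> sat (fun i => f (e i)) phi).

Definition automorphism (L : language) (M : structure L) (s : M -> M) : Prop :=
  bijective s /\
  forall (r : rsym L) (a : 'I_(rar r) -> M),
    @rinterp L M r a <-> @rinterp L M r (fun k => s (a k)).

Definition strongly_homogeneous (L : language) (M : structure L) (K : Type) :=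
  forall C : M -> Prop, small K C ->
  forall f : M -> M, partial_elementary C f ->
  exists s, automorphism s /\ forall u, C u -> s u = f u.

(* M is a monster model (of its complete theory Th(M)) with saturation degree
   kappa = |K| > |L| + aleph_0 *)
Definition monster (L : language) (M : structure L) (K : Type) : Prop :=
  inhabited M /\ card_lt nat K /\ card_lt (rsym L) K /\
  saturated M K /\ strongly_homogeneous M K.

Definition fullset {L : language} (M : structure L) : M -> Prop := fun _ => True.
Arguments fullset {L} M _.

(* mu in M_n(C): a finitely additive probability measure on the Boolean algebra
   of C-definable subsets of M^n (values on other predicates are irrelevant) *)
Definition keisler (L : language) (M : structure L) (C : M -> Prop) (n : nat)
  (mu : tpred M n -> R) : Prop :=
  (forall D D', definable C D -> (forall v, D v <-> D' v) -> mu D = mu D') /\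
  (forall D, definable C D -> (0 <= mu D)%R) /\
  mu (fun _ => True) = 1%R /\
  (forall D1 D2, definable C D1 -> definable C D2 ->
     (forall v, ~ (D1 v /\ D2 v)) ->
     mu (fun v => D1 v \/ D2 v) = (mu D1 + mu D2)%R).

(* equality of measures as elements of M_n(C) (also gives restriction) *)
Definition meq (L : language) (M : structure L) (C : M -> Prop) (n : nat)
  (mu nu : tpred M n -> R) : Prop :=
  forall D, definable C D -> mu D = nu D.

Definition xpart (T : Type) (n m : nat) (w : 'I_(n + m) -> T) : 'I_n -> T :=
  fun i => w (lshift m i).
Definition ypart (T : Type) (n m : nat) (w : 'I_(n + m) -> T) : 'I_m -> T :=
  fun j => w (rshift n j).

Definition pi_x (L : language) (M : structure L) (n m : nat)
  (om : tpred M (n + m) -> R) : tpred M n -> R :=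
  fun D => om (fun w => D (xpart w)).
Definition pi_y (L : language) (M : structure L) (n m : nat)
  (om : tpred M (n + m) -> R) : tpred M m -> R :=
  fun D => om (fun w => D (ypart w)).

Definition amalgam (L : language) (M : structure L) (C : M -> Prop) (n m : nat)
  (la : tpred M (n + m) -> R) : Prop :=
  keisler C la /\
  forall (P : tpred M n) (Q : tpred M m), definable C P -> definable C Q ->
    la (fun w => P (xpart w) /\ Q (ypart w)) =
      (pi_x la P * pi_y la Q)%R.

Definition in_Amal (L : language) (M : structure L) (C : M -> Prop) (n m : nat)
  (la : tpred M (n + m) -> R) (mu : tpred M n -> R)
  (om : tpred M (n + m) -> R) : Prop :=
  amalgam (fullset M) om /\ meq C om la /\ meq (fullset M) (pi_x om) mu.

Definition btri (L : language) (M : structure L) (C : M -> Prop) (n m : nat)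
  (mu : tpred M n -> R) (nu : tpred M m -> R) : Prop :=
  exists la : tpred M (n + m) -> R,
    keisler C la /\ meq C (pi_x la) mu /\
    (exists om, in_Amal C la mu om) /\
    (forall om, in_Amal C la mu om -> meq (fullset M) (pi_y om) nu).

(* q in S_m(M): an ultrafilter on the Boolean algebra of M-definable subsets of
   M^m (= a complete type over M, as a set of formulas modulo Th(M_M)) *)
Definition complete_type (L : language) (M : structure L) (m : nat)
  (q : tpred M m -> Prop) : Prop :=
  (forall D, q D -> definable (fullset M) D) /\
  q (fun _ => True) /\
  ~ q (fun _ => False) /\
  (forall D1 D2, q D1 -> q D2 -> q (fun v => D1 v /\ D2 v)) /\
  (forall D1 D2, q D1 -> definable (fullset M) D2 -> (forall v, D1 v -> D2 v) ->
     q D2) /\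
  (forall D, definable (fullset M) D -> q D \/ q (fun v => ~ D v)).

Definition in_supp (L : language) (M : structure L) (m : nat)
  (nu : tpred M m -> R) (q : tpred M m -> Prop) : Prop :=
  complete_type q /\ forall D, q D -> (0 < nu D)%R.

Definition supp_disjoint (L : language) (M : structure L) (m : nat)
  (nu1 nu2 : tpred M m -> R) : Prop :=
  ~ exists q, in_supp nu1 q /\ in_supp nu2 q.

Definition add_tuple (T : Type) (A : T -> Prop) (k : nat) (b : 'I_k -> T) : T -> Prop :=
  fun u => A u \/ exists i, b i = u.

Definition mix (T : Type) (r s : R) (nu1 nu2 : T -> R) : T -> R :=
  fun D => (r * nu1 D + s * nu2 D)%R.

(* Main.v *)
Require Import Defs.
From Stdlib Require Import Reals Lra.
From Stdlib Require Import FunctionalExtensionality PropExtensionality Classical.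
From mathcomp Require Import ssreflect ssrfun ssrbool eqtype ssrnat fintype.
From mathcomp Require Import zify.
Set Implicit Arguments.
Unset Strict Implicit.

Lemma predext (T : Type) (P Q : T -> Prop) : (forall v, P v <-> Q v) -> P = Q.
Proof.
move=> H; apply: functional_extensionality => v; apply: propositional_extensionality; exact: H.
Qed.

Section Ren.
Variables (L : language) (M : structure L).

Fixpoint ren (rho : nat -> nat) (phi : formula L) : formula L :=
  match phi with
  | F_eq i j => F_eq L (rho i) (rho j)
  | F_rel r a => @F_rel L r (fun k => rho (a k))
  | F_not p => F_not (ren rho p)
  | F_and p q => F_and (ren rho p) (ren rho q)
  | F_ex i p => F_ex (rho i) (ren rho p)
  end.

Lemma sat_ren (rho : nat -> nat) (Hr : injective rho) :
  forall phi (e : nat -> M), sat e (ren rho phi) <-> sat (fun i => e (rho i)) phi.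
Proof.
elim=> [i j|r a|p IH|p IHp q IHq|i p IH] e /=.
- by [].
- by [].
- by split=> H1 H2; apply: H1; apply/IH.
- by split=> -[H1 H2]; split; first [apply/IHp | apply/IHq].
- split=> -[u H]; exists u.
  + have E : (fun k => if rho k == rho i then u else e (rho k)) =
             (fun j => if j == i then u else e (rho j)).
      by apply: functional_extensionality => k; rewrite (inj_eq Hr).
    by rewrite -E; exact: (proj1 (IH _) H).
  + have E : (fun k => if rho k == rho i then u else e (rho k)) =
             (fun j => if j == i then u else e (rho j)).
      by apply: functional_extensionality => k; rewrite (inj_eq Hr).
    by move: H; rewrite -E => H; exact: (proj2 (IH _) H).
Qed.

Definition ord0_fun (T : Type) : 'I_0 -> T.
Proof. by case=> m hm; exfalso; rewrite ltn0 in hm. Defined.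

Lemma def_mono (C C' : M -> Prop) N (D : tpred M N) :
  (forall u, C u -> C' u) -> definable C D -> definable C' D.
Proof.
move=> H [phi [k [p [Hp HD]]]]; exists phi, k, p; split=> // i; exact: H.
Qed.

Lemma def_not (C : M -> Prop) N (D : tpred M N) :
  definable C D -> definable C (fun v => ~ D v).
Proof.
move=> [phi [k [p [Hp HD]]]]; exists (F_not phi), k, p; split=> // v e H1 H2 /=.
have := HD v e H1 H2; tauto.
Qed.

Lemma def_true (C : M -> Prop) N : definable C (fun _ : 'I_N -> M => True).
Proof.
exists (F_eq L 0 0), 0, (ord0_fun M); split; first by case=> m hm; exfalso; rewrite ltn0 in hm.
by move=> v e _ _ /=.
Qed.

Lemma def_and (C : M -> Prop) N (D1 D2 : tpred M N) :
  definable C D1 -> definable C D2 -> definable C (fun v => D1 v /\ D2 v).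
Proof.
move=> [phi1 [k1 [p1 [Hp1 HD1]]]] [phi2 [k2 [p2 [Hp2 HD2]]]].
pose rho j := if j < N then j else j + k1.
have Hr : injective rho.
  move=> a b; rewrite /rho; case: (ltnP a N); case: (ltnP b N) => ? ? ?; lia.
exists (F_and phi1 (ren rho phi2)), (k1 + k2),
  (fun i => match split i with inl a => p1 a | inr b => p2 b end).
split.
  by move=> i; case: (split i) => a; [exact: Hp1 | exact: Hp2].
move=> v e Hv He /=.
have E1' : D1 v <-> sat e phi1.
  apply: HD1 => // i; have := He (lshift k2 i).
  by rewrite (unsplitK (inl i)).
have E2 : D2 v <-> sat (fun j => e (rho j)) phi2.
  apply: HD2.
    by move=> i; rewrite /rho ltn_ord; exact: Hv.
  move=> i; have := He (rshift k1 i); rewrite (unsplitK (inr i)) /= => <-.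
  rewrite /rho; case: ifP => [h|_]; first by lia.
  by congr e; lia.
have E3 := @sat_ren rho Hr phi2 e.
tauto.
Qed.

Lemma def_pull_y (C : M -> Prop) n m (D : tpred M m) :
  definable C D -> definable C (fun w : 'I_(n + m) -> M => D (ypart w)).
Proof.
move=> [phi [k [p [Hp HD]]]].
have Hr : injective (addn n) by exact: addnI.
exists (ren (addn n) phi), k, p; split=> // w e Hw He.
have E := HD (ypart w) (fun j => e (n + j)) (fun i => Hw (rshift n i)) _.
have E3 := @sat_ren _ Hr phi e.
suff : D (ypart w) <-> sat (fun j => e (n + j)) phi by tauto.
apply: E => i; rewrite addnA; exact: He.
Qed.

End Ren.

Section Meas.
Variables (L : language) (M : structure L) (C : M -> Prop) (N : nat)
  (ka : tpred M N -> R).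
Hypothesis Hk : keisler C ka.

Lemma k_ge0 D : definable C D -> (0 <= ka D)%R.
Proof. by case: Hk => _ [H _]; exact: H. Qed.

Lemma k_add D1 D2 : definable C D1 -> definable C D2 ->
  (forall v, ~ (D1 v /\ D2 v)) -> ka (fun v => D1 v \/ D2 v) = (ka D1 + ka D2)%R.
Proof. by case: Hk => _ [_ [_ H]]; exact: H. Qed.

Lemma k_true : ka (fun _ => True) = 1%R.
Proof. by case: Hk => _ [_ [H _]]. Qed.

Lemma k_split E D : definable C E -> definable C D ->
  ka E = (ka (fun v => E v /\ D v) + ka (fun v => E v /\ ~ D v))%R.
Proof.
move=> hE hD.
have -> : E = (fun v => (E v /\ D v) \/ (E v /\ ~ D v)).
  by apply: predext => v; case: (classic (D v)); tauto.
rewrite k_add; first last.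
- by move=> v; tauto.
- exact/def_and/def_not.
- exact/def_and.
by congr (_ + _)%R; congr ka; apply: predext => v; case: (classic (D v)); tauto.
Qed.

Lemma k_compl D : definable C D -> ka (fun v => ~ D v) = (1 - ka D)%R.
Proof.
move=> hD.
have := k_add hD (def_not hD) (fun v => ltac:(tauto)).
have -> : (fun v => D v \/ ~ D v) = (fun _ => True).
  by apply: predext => v; case: (classic (D v)); tauto.
rewrite k_true; lra.
Qed.

Lemma k_mono D E : definable C D -> definable C E -> (forall v, D v -> E v) ->
  (ka D <= ka E)%R.
Proof.
move=> hD hE sub.
rewrite (k_split hE hD).
have -> : (fun v => E v /\ D v) = D by apply: predext => v; split; [case | move=> h; split; auto].
have := k_ge0 (def_and hE (def_not hD)); lra.
Qed.

End Meas.

From mathcomp Require Import classical_sets filter.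

Section Sep.
Variables (L : language) (M : structure L) (m : nat) (nu1 nu2 : tpred M m -> R).
Hypotheses (H1 : keisler (fullset M) nu1) (H2 : keisler (fullset M) nu2).

Lemma full_and (nu : tpred M m -> R) : keisler (fullset M) nu ->
  forall A B, definable (fullset M) A -> definable (fullset M) B ->
  nu A = 1%R -> nu B = 1%R -> nu (fun v => A v /\ B v) = 1%R.
Proof.
move=> hnu A B hA hB eA eB.
have := k_split hnu hA hB.
have := k_mono hnu (def_and hA (def_not hB)) (def_not hB) (fun v => @proj2 _ _).
rewrite (k_compl hnu hB) eB.
have := k_ge0 hnu (def_and hA (def_not hB)).
lra.
Qed.

Lemma separate : supp_disjoint nu1 nu2 ->
  exists psi, definable (fullset M) psi /\ nu1 psi = 1%R /\ nu2 psi = 0%R.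
Proof.
move=> Hd; apply: NNPP => Hno.
have Hno' : forall psi, definable (fullset M) psi -> nu1 psi = 1%R -> nu2 psi <> 0%R.
  by move=> psi hp h1 h2; apply: Hno; exists psi.
pose F : set_system ('I_m -> M) := fun X => exists A1 A2,
  definable (fullset M) A1 /\ definable (fullset M) A2 /\ nu1 A1 = 1%R /\
  nu2 A2 = 1%R /\ (forall v, A1 v -> A2 v -> X v).
have FF : ProperFilter F.
  constructor.
    move=> [A1 [A2 [hA1 [hA2 [e1 [e2 Hv]]]]]].
    apply: (Hno' A1 hA1 e1).
    have := k_mono H2 hA1 (def_not hA2) (fun v h1 h2 => Hv v h1 h2).
    rewrite (k_compl H2 hA2) e2.
    have := k_ge0 H2 hA1; lra.
  constructor.
  - exists (fun _ => True), (fun _ => True).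
    do 2 (split; first exact: def_true).
    by split; [exact: (k_true H1) | split; [exact: (k_true H2) | move=> v]].
  - move=> X Y [A1 [A2 [hA1 [hA2 [e1 [e2 Hv]]]]]] [B1 [B2 [hB1 [hB2 [f1 [f2 Hw]]]]]].
    exists (fun v => A1 v /\ B1 v), (fun v => A2 v /\ B2 v).
    split; first exact: def_and.
    split; first exact: def_and.
    split; first exact: full_and.
    split; first exact: full_and.
    move=> v [a1 b1] [a2 b2]; split; [exact: Hv | exact: Hw].
  - move=> X Y sXY [A1 [A2 [hA1 [hA2 [e1 [e2 Hv]]]]]].
    exists A1, A2; do 4 (split=> //).
    by move=> v a1 a2; apply: sXY; exact: Hv.
have [G [GU FG]] := ultraFilterLemma FF.
have GP : ProperFilter G := @ultra_proper _ _ GU.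
have GF : Filter G := @filter_filter _ _ GP.
pose q : tpred M m -> Prop := fun D => definable (fullset M) D /\ G D.
have Gnot : forall D, G D -> G (fun v => ~ D v) -> False.
  move=> D g1 g2.
  have := @filterI _ G GF _ _ g1 g2.
  have -> : (D `&` (fun v => ~ D v))%classic = set0.
    by apply: predext => v; split=> //; case.
  exact: (@filter_not_empty _ G GP).
have inS : forall nu, keisler (fullset M) nu ->
    (forall A, definable (fullset M) A -> nu A = 1%R -> G A) ->
    forall D, q D -> (0 < nu D)%R.
  move=> nu hnu hG D [hD gD].
  apply: Rnot_le_lt => hle.
  have e0 : nu D = 0%R by have := k_ge0 hnu hD; lra.
  apply: (Gnot D gD); apply: hG; first exact: def_not.
  by rewrite (k_compl hnu hD) e0; lra.
have ctq : complete_type q.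
  split; first by move=> D [].
  split; first by split; [exact: def_true | exact: (@filterT _ G GF)].
  split; first by move=> [_ h]; exact: (@filter_not_empty _ G GP).
  split.
    move=> D1 D2 [h1 g1] [h2 g2]; split; first exact: def_and.
    exact: (@filterI _ G GF _ _ g1 g2).
  split.
    move=> D1 D2 [h1 g1] h2 s; split=> //.
    exact: (@filterS _ G GF D1 D2 s g1).
  move=> D hD.
  case: (in_ultra_setVsetC D GU) => g; [left | right]; split=> //.
  exact: def_not.
apply: Hd; exists q; split; split=> //.
- apply: inS => // A hA eA; apply: FG.
  exists A, (fun _ => True); split=> //; split; first exact: def_true.
  by split=> //; split; [exact: (k_true H2) | move=> v].
- apply: inS => // A hA eA; apply: FG.
  exists (fun _ => True), A; split; first exact: def_true.
  by split=> //; split; [exact: (k_true H1) | split=> // v].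
Qed.

End Sep.

Lemma core (L : language) (M : structure L) (n m : nat) (A C' : M -> Prop)
  (la la_a om_a om_b om : tpred M (n + m) -> R) (mu : tpred M n -> R)
  (nu_a nu_b : tpred M m -> R) (psi : tpred M m) (r s : R) :
  (forall u, A u -> C' u) ->
  definable C' psi ->
  nu_a psi = 1%R -> nu_b psi = 0%R ->
  (0 <= r)%R -> (0 <= s)%R ->
  in_Amal A la_a mu om_a ->
  meq (fullset M) (pi_y om_a) nu_a ->
  meq (fullset M) (pi_y om_b) nu_b ->
  keisler (fullset M) om_b ->
  (forall om', in_Amal A la_a mu om' -> meq (fullset M) (pi_y om') nu_a) ->
  (forall D, la D = r * om_a D + s * om_b D)%R ->
  in_Amal C' la mu om ->
  forall th, definable (fullset M) th ->
    om (fun w => th (ypart w) /\ psi (ypart w)) = (r * nu_a th)%R.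
Proof.
move=> hAC hpsi ea eb hr hs Ha Hya Hyb Hkb Huniq Hla Hom th hth.
have [[Hko Hpo] [Hmo Hxo]] := Hom.
have [[Hka Hpa] [Hma Hxa]] := Ha.
have hPsiC : definable C' (fun w : 'I_(n + m) -> M => psi (ypart w)) := def_pull_y n hpsi.
have hpsiF : definable (fullset M) psi := def_mono (fun _ _ => I) hpsi.
have hPsiF : definable (fullset M) (fun w : 'I_(n + m) -> M => psi (ypart w)) :=
  def_pull_y n hpsiF.
have omPsi : om (fun w => psi (ypart w)) = r.
  rewrite (Hmo _ hPsiC) Hla.
  have a1 : om_a (fun w => psi (ypart w)) = nu_a psi := Hya psi hpsiF.
  have b1 : om_b (fun w => psi (ypart w)) = nu_b psi := Hyb psi hpsiF.
  rewrite a1 b1 ea eb; ring.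
have hthy : definable (fullset M) (fun w : 'I_(n + m) -> M => th (ypart w)) :=
  def_pull_y n hth.
have hset := def_and hthy hPsiF.
case: (Req_dec r 0) => [r0|rn0].
  have h1 := k_mono Hko hset hPsiF (fun w => @proj2 _ _).
  have h2 := k_ge0 Hko hset.
  rewrite omPsi r0 in h1; rewrite r0; lra.
have rp : (0 < r)%R by lra.
pose om' := fun D : tpred M (n + m) => (om (fun w => D w /\ psi (ypart w)) / r)%R.
have F2 : forall chi, definable A chi ->
    om (fun w => chi w /\ psi (ypart w)) = (r * la_a chi)%R.
  move=> chi hc.
  have hcC : definable C' chi := def_mono hAC hc.
  have hcF : definable (fullset M) chi := def_mono (fun _ _ => I) hc.
  rewrite (Hmo _ (def_and hcC hPsiC)) Hla.
  have b0 : om_b (fun w => chi w /\ psi (ypart w)) = 0%R.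
    have := k_mono Hkb (def_and hcF hPsiF) hPsiF (fun w => @proj2 _ _).
    have b1 : om_b (fun w => psi (ypart w)) = nu_b psi := Hyb psi hpsiF.
    rewrite b1 eb.
    have := k_ge0 Hkb (def_and hcF hPsiF); lra.
  have a0 : om_a (fun w => chi w /\ psi (ypart w)) = la_a chi.
    have := k_split Hka hcF hPsiF.
    have := k_mono Hka (def_and hcF (def_not hPsiF)) (def_not hPsiF) (fun w => @proj2 _ _).
    rewrite (k_compl Hka hPsiF).
    have a1 : om_a (fun w => psi (ypart w)) = nu_a psi := Hya psi hpsiF.
    rewrite a1 ea (Hma chi hc).
    have := k_ge0 Hka (def_and hcF (def_not hPsiF)); lra.
  rewrite b0 a0; ring.
have F3 : forall P Q, definable (fullset M) P -> definable (fullset M) Q ->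
    om (fun w => (P (xpart w) /\ Q (ypart w)) /\ psi (ypart w)) =
    (mu P * pi_y om (fun v => Q v /\ psi v))%R.
  move=> P Q hP hQ.
  have E := Hpo P (fun v => Q v /\ psi v) hP (def_and hQ hpsiF).
  rewrite (Hxo P hP) in E.
  rewrite -E; congr om; apply: predext => w /=; tauto.
have F4 : forall P, definable (fullset M) P ->
    om (fun w => P (xpart w) /\ psi (ypart w)) = (mu P * r)%R.
  move=> P hP.
  have E := Hpo P psi hP hpsiF.
  rewrite (Hxo P hP) in E.
  rewrite E; congr (_ * _)%R; exact: omPsi.
have key : in_Amal A la_a mu om'.
  split; last split.
  - split.
    + split; last split; last split.
      * by move=> D D' _ h; rewrite (predext h).
      * move=> D hD; rewrite /om'; unfold Rdiv; apply: Rmult_le_pos.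
          exact: (k_ge0 Hko (def_and hD hPsiF)).
        by left; apply: Rinv_0_lt_compat.
      * rewrite /om'.
        have -> : (fun w : 'I_(n + m) -> M => True /\ psi (ypart w)) =
                  (fun w => psi (ypart w)) by apply: predext => w; tauto.
        by rewrite omPsi; field.
      * move=> D1 D2 h1 h2 hd; rewrite /om'.
        have -> : (fun w => (D1 w \/ D2 w) /\ psi (ypart w)) =
          (fun w => (fun w => D1 w /\ psi (ypart w)) w \/
                    (fun w => D2 w /\ psi (ypart w)) w).
          by apply: predext => w; tauto.
        have hdis : forall v, ~ ((fun w => D1 w /\ psi (ypart w)) v /\
                                 (fun w => D2 w /\ psi (ypart w)) v).
          by move=> v; have := hd v; simpl; tauto.
        rewrite (k_add Hko (def_and h1 hPsiF) (def_and h2 hPsiF) hdis).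
        field; lra.
    + move=> P Q hP hQ; rewrite /om' /pi_x /pi_y /om'; cbv beta.
      rewrite (F3 P Q hP hQ) (F4 P hP).
      change (om (fun w => Q (ypart w) /\ psi (ypart w))) with
        (pi_y om (fun v => Q v /\ psi v)).
      field; lra.
  - by move=> chi hc; rewrite /om' (F2 chi hc); field; lra.
  - by move=> P hP; rewrite /pi_x /om'; cbv beta; rewrite (F4 P hP); field; lra.
have := Huniq om' key th hth.
rewrite /pi_y /om'; cbv beta => <-.
field; lra.
Qed.

Theorem proposition5p9 (L : language) (M : structure L) (K : Type)
  (A : M -> Prop) (n m : nat)
  (mu : tpred M n -> R) (nu1 nu2 : tpred M m -> R) :
  monster M K ->
  small K A ->
  keisler (fullset M) mu ->
  keisler (fullset M) nu1 ->
  keisler (fullset M) nu2 ->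
  supp_disjoint nu1 nu2 ->
  btri A mu nu1 ->
  btri A mu nu2 ->
  exists (k : nat) (b : 'I_k -> M),
    forall r s : R, (0 <= r)%R -> (r <= 1)%R -> (0 <= s)%R -> (s <= 1)%R ->
      (r + s = 1)%R ->
      btri (add_tuple A b) mu (mix r s nu1 nu2).
Proof.
move=> _ _ hmu hnu1 hnu2 hdisj [la1 [hk1 [hx1 [[om1 Hom1] Hu1]]]]
  [la2 [hk2 [hx2 [[om2 Hom2] Hu2]]]].
have [psi [hpsiF [e1 e2]]] := separate hnu1 hnu2 hdisj.
have [phi [k [b [_ Hb]]]] := hpsiF.
exists k, b => r s hr0 hr1 hs0 hs1 hrs.
have hpsiC : definable (add_tuple A b) psi.
  exists phi, k, b; split; last exact: Hb.
  by move=> i; right; exists i.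
have hAC : forall u, A u -> add_tuple A b u by move=> u h; left.
have [[Hk1 Hp1] [Hm1 Hx1]] := Hom1.
have [[Hk2 Hp2] [Hm2 Hx2]] := Hom2.
have hy1 := Hu1 om1 Hom1.
have hy2 := Hu2 om2 Hom2.
pose la := mix r s om1 om2.
have hkla : forall C, keisler C la.
  move=> C; split; last split; last split.
  - by move=> D D' _ h; rewrite (predext h).
  - move=> D hD; rewrite /la /mix.
    have hDF := def_mono (fun _ _ => I) hD.
    apply: Rplus_le_le_0_compat; apply: Rmult_le_pos => //.
      exact: (k_ge0 Hk1 hDF).
    exact: (k_ge0 Hk2 hDF).
  - rewrite /la /mix (k_true Hk1) (k_true Hk2); lra.
  - move=> D1 D2 h1 h2 hd; rewrite /la /mix.
    have h1F := def_mono (fun _ _ => I) h1.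
    have h2F := def_mono (fun _ _ => I) h2.
    rewrite (k_add Hk1 h1F h2F hd) (k_add Hk2 h1F h2F hd); ring.
have hxla : meq (fullset M) (pi_x la) mu.
  move=> D hD; rewrite /pi_x /la /mix.
  have a1 : om1 (fun w => D (xpart w)) = mu D := Hx1 D hD.
  have a2 : om2 (fun w => D (xpart w)) = mu D := Hx2 D hD.
  rewrite a1 a2; replace s with (1 - r)%R by lra; ring.
exists la; split; first exact: hkla.
split.
  by move=> D hD; apply: hxla; exact: (def_mono (fun _ _ => I) hD).
split.
  exists la; split; last split => //.
  split; first exact: hkla.
  move=> P Q hP hQ.
  have E1 := Hp1 P Q hP hQ.
  have E2 := Hp2 P Q hP hQ.
  have a1 : om1 (fun w => P (xpart w)) = mu P := Hx1 P hP.
  have a2 : om2 (fun w => P (xpart w)) = mu P := Hx2 P hP.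
  have c1 : om1 (fun w => Q (ypart w)) = nu1 Q := hy1 Q hQ.
  have c2 : om2 (fun w => Q (ypart w)) = nu2 Q := hy2 Q hQ.
  rewrite /pi_x /pi_y in E1 E2.
  rewrite /pi_x /pi_y /la /mix E1 E2 a1 a2 c1 c2.
  replace s with (1 - r)%R by lra; ring.
move=> om Hom th hth.
have [[Hko _] _] := Hom.
have hpsi' : definable (add_tuple A b) (fun v => ~ psi v) := def_not hpsiC.
have c1 := @core L M n m A (add_tuple A b) la la1 om1 om2 om mu nu1 nu2 psi r s
  hAC hpsiC e1 e2 hr0 hs0 Hom1 hy1 hy2 Hk2 Hu1 (fun D => erefl) Hom th hth.
have c2 := @core L M n m A (add_tuple A b) la la2 om2 om1 om mu nu2 nu1
  (fun v => ~ psi v) s r hAC hpsi'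
  ltac:(rewrite (k_compl hnu2 hpsiF) e2; ring)
  ltac:(rewrite (k_compl hnu1 hpsiF) e1; ring)
  hs0 hr0 Hom2 hy2 hy1 Hk1 Hu2 (fun D => ltac:(rewrite /la /mix; ring)) Hom th hth.
have hthy := def_pull_y n hth.
have hPsiF := def_pull_y n hpsiF.
have S := k_split Hko hthy hPsiF.
cbv beta in S, c2.
rewrite /pi_y /mix S c1 c2; ring.
Qed.
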